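(* Let $k$ be a positive integer and let $G$ be a finite, simple, undirected, connected graph of order $n\ge 2$. (a) If $O_{R,k}(G)=\mathcal{M}$, then $\dim_k(G)\le\lfloor n/2\rfloor$. (b) If $\dim_k(G)\ge\lceil n/2\rceil+1$, then $O_{R,k}(G)=\mathcal{B}$.
   Context: $d(x,y)$ is the shortest-path distance and $d_k(x,y)=\min\{d(x,y),k+1\}$. A set $S\subseteq V(G)$ is a distance-$k$ resolving set if for all distinct $x,y\in V(G)$ some $z\in S$ has $d_k(x,z)\ne d_k(y,z)$; $\dim_k(G)$ is the minimum cardinality of a distance-$k$ resolving set. In the Maker-Breaker distance-$k$ resolving game on $G$, Maker and Breaker alternately select a not-yet-chosen vertex; Maker wins if his selected vertices form a distance-$k$ resolving set, Breaker wins otherwise. $O_{R,k}(G)=\mathcal{M}$ if Maker has a winning strategy whether he moves first or second, $\mathcal{B}$ if Breaker has a winning strategy whether she moves first or second, and $\mathcal{N}$ if the first player has a winning strategy. *)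

(* Defs.v *)
From mathcomp Require Import all_boot.
Set Implicit Arguments. Unset Strict Implicit. Unset Printing Implicit Defensive.

Section Game.
Variables (T : finType) (e : rel T).

Definition walk_len (n : nat) (x y : T) : bool :=
  [exists p : n.-tuple T, path e x p && (last x p == y)].

(* shortest-path distance: least n with a walk of length n from x to y
   (for a connected graph this is < #|T|; otherwise the value #|T| is a dummy) *)
Definition gdist (x y : T) : nat :=
  find (fun n => walk_len n x y) (iota 0 #|T|).

Definition dk (k : nat) (x y : T) : nat := minn (gdist x y) k.+1.

Definition resolving (k : nat) (S : {set T}) : bool :=
  [forall x, forall y, (x != y) ==> [exists z in S, dk k x z != dk k y z]].

(* dim_k(G): minimum cardinality of a distance-k resolving set
   (V(G) itself is always resolving, so the minimum is <= #|T|) *)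
Definition dimk (k : nat) : nat :=
  find (fun m => [exists S : {set T}, resolving k S && (#|S| == m)]) (iota 0 #|T|.+1).

Definition freev (M B : {set T}) : {set T} := ~: (M :|: B).

(* Maker (with current set M, Breaker's set B) has a winning strategy,
   when it is Maker's turn iff mturn; n is fuel (>= number of free vertices). *)
Fixpoint makerWins (k n : nat) (M B : {set T}) (mturn : bool) : bool :=
  match n with
  | 0 => resolving k M
  | n'.+1 =>
    if freev M B == set0 then resolving k M
    else if mturn then [exists v in freev M B, makerWins k n' (v |: M) B false]
    else [forall v in freev M B, makerWins k n' M (v |: B) true]
  end.

Fixpoint breakerWins (k n : nat) (M B : {set T}) (mturn : bool) : bool :=
  match n with
  | 0 => ~~ resolving k M
  | n'.+1 =>
    if freev M B == set0 then ~~ resolving k M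
    else if mturn then [forall v in freev M B, breakerWins k n' (v |: M) B false]
    else [exists v in freev M B, breakerWins k n' M (v |: B) true]
  end.

Definition maker_first_wins k := makerWins k #|T| set0 set0 true.
Definition maker_second_wins k := makerWins k #|T| set0 set0 false.
Definition breaker_first_wins k := breakerWins k #|T| set0 set0 false.
Definition breaker_second_wins k := breakerWins k #|T| set0 set0 true.

End Game.

Inductive outcome := OutM | OutB | OutN.

Definition outcomeRk (T : finType) (e : rel T) (k : nat) : outcome :=
  if maker_first_wins e k && maker_second_wins e k then OutM
  else if breaker_first_wins e k && breaker_second_wins e k then OutB
  else OutN.

Definition connected_graph (T : finType) (e : rel T) : Prop :=
  forall x y : T, connect e x y.

(* Main.v *)
Require Import Defs.
From mathcomp Require Import all_boot.
From mathcomp Require Import zify.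

Section Aux.
Variables (T : finType) (e : rel T) (k : nat).

Definition bnd (mt : bool) (f : nat) := if mt then f.+1 %/ 2 else f %/ 2.

Lemma dimk_le (S : {set T}) : resolving e k S -> dimk e k <= #|S|.
Proof.
move=> hS; rewrite /dimk.
set P := (fun m => _).
have hs : #|S| < #|T|.+1 by rewrite ltnS max_card.
case: (leqP (find P (iota 0 #|T|.+1)) #|S|) => // hlt.
have := before_find 0 hlt.
rewrite nth_iota // add0n => H.
suff : P #|S| by rewrite H.
by rewrite /P /=; apply/existsP; exists S; rewrite hS eqxx.
Qed.

Lemma freeM (v : T) M B : freev (v |: M) B = freev M B :\ v.
Proof. by apply/setP => x; rewrite !inE; case: (x == v). Qed.
Lemma freeB (v : T) M B : freev M (v |: B) = freev M B :\ v.
Proof. by apply/setP => x; rewrite !inE; case: (x == v); rewrite ?orbT. Qed.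

Lemma card_free1 (v : T) (A : {set T}) : v \in A -> #|A :\ v| = #|A|.-1.
Proof. by move=> hv; rewrite (cardsD1 v A) hv. Qed.

Lemma maker_lem n : forall M B mt, #|freev M B| <= n -> makerWins e k n M B mt ->
  exists M' : {set T}, resolving e k M' /\ #|M'| <= #|M| + bnd mt #|freev M B|.
Proof.
elim: n => [|n IH] M B mt hn /=.
  by move=> h; exists M; split => //; rewrite leq_addr.
case: ifP => [_ h|/negbT hne]; first by exists M; split => //; rewrite leq_addr.
have [v hv] : exists v, v \in freev M B.
  by case/set0Pn: hne => v hv; exists v.
have hc := card_free1 _ _ hv.
have hpos : 0 < #|freev M B| by apply/card_gt0P; exists v.
case: mt.
  case/existsP => w /andP [hw hW].
  have hcw := card_free1 _ _ hw.
  have [|M' [hr hM']] := IH _ _ _ _ hW; first by rewrite freeM hcw; lia.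
  exists M'; split => //; move: hM'; rewrite freeM hcw /bnd.
  have := cardsU1 w M; rewrite (_ : (w \in M) = false); last first.
    by move: hw; rewrite !inE; case: (w \in M).
  move=> ->; move: hpos; set f := #|freev M B|; move=> hpos.
  have : f.-1 %/ 2 + 1 = f.+1 %/ 2.
    case: f hpos {hcw hc} => // f _ /=.
    by rewrite -(addn2 f) (divnDr _ (dvdnn 2)) divnn.
  lia.
move/forallP/(_ v); rewrite hv /= => hW.
have [|M' [hr hM']] := IH _ _ _ _ hW; first by rewrite freeB hc; lia.
exists M'; split => //; move: hM'; rewrite freeB hc /bnd.
by rewrite prednK.
Qed.

Lemma breaker_lem c n : (forall M' : {set T}, resolving e k M' -> c < #|M'|) ->
  forall M B mt, #|freev M B| <= n -> #|M| + bnd mt #|freev M B| <= c ->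
  breakerWins e k n M B mt.
Proof.
move=> hc; elim: n => [|n IH] M B mt hn hle /=.
  by apply/negP => /hc; lia.
case: ifP => [_|/negbT hne]; first by apply/negP => /hc; lia.
have [v hv] : exists v, v \in freev M B.
  by case/set0Pn: hne => v hv; exists v.
have hc1 := card_free1 _ _ hv.
have hpos : 0 < #|freev M B| by apply/card_gt0P; exists v.
case: mt hle => hle.
  apply/forallP => w; apply/implyP => hw.
  have hcw := card_free1 _ _ hw.
  apply: IH; first by rewrite freeM hcw; lia.
  rewrite freeM hcw /bnd.
  have := cardsU1 w M; rewrite (_ : (w \in M) = false); last first.
    by move: hw; rewrite !inE; case: (w \in M).
  move=> ->; move: hle hpos; rewrite /bnd; set f := #|freev M B|; move=> hle hpos.
  have : f.-1 %/ 2 + 1 = f.+1 %/ 2.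
    case: f hpos {hcw hc1 hle} => // f _ /=.
    by rewrite -(addn2 f) (divnDr _ (dvdnn 2)) divnn.
  lia.
apply/existsP; exists v; rewrite hv /=.
apply: IH; first by rewrite freeB hc1; lia.
by rewrite freeB hc1 /bnd prednK.
Qed.

End Aux.

Theorem mainTheorem5 (T : finType) (e : rel T) (k : nat) :
  0 < k -> symmetric e -> irreflexive e -> connected_graph e -> 2 <= #|T| ->
  (outcomeRk e k = OutM -> dimk e k <= #|T| %/ 2) /\
  ((#|T|.+1) %/ 2 + 1 <= dimk e k -> outcomeRk e k = OutB).
Proof.
move=> _ _ _ _ _.
have f0 : freev (set0 : {set T}) set0 = setT.
  by apply/setP => x; rewrite !inE.
have hf : #|freev (set0 : {set T}) set0| = #|T| by rewrite f0 cardsT.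
have hmono : #|T| %/ 2 <= #|T|.+1 %/ 2 by apply: leq_div2r.
split.
  rewrite /outcomeRk; case: ifP => [/andP [_ h2] _| _]; last by case: ifP.
  have [|M' [hr hM']] := maker_lem _ _ _ _ _ _ _ _ h2; first by rewrite hf.
  apply: leq_trans (dimk_le _ _ _ _ hr) _; move: hM'; rewrite cards0 hf /bnd //.
move=> hd.
have hc : forall M' : {set T}, resolving e k M' -> #|T|.+1 %/ 2 < #|M'|.
  by move=> M' /(dimk_le _ _ _ _); lia.
have nm : forall mt, ~~ makerWins e k #|T| set0 set0 mt.
  move=> mt; apply/negP => h.
  have [|M' [hr hM']] := maker_lem _ _ _ _ _ _ _ _ h; first by rewrite hf.
  move: hM' (hc _ hr); rewrite cards0 hf /bnd; case: mt {h}; lia.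
rewrite /outcomeRk /maker_first_wins /maker_second_wins (negbTE (nm true)) /=.
rewrite /breaker_first_wins /breaker_second_wins.
rewrite !(breaker_lem _ _ _ _ _ hc) //; rewrite ?hf // cards0 /bnd //.
Qed.
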